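(* For every integer $t\ge 2$ and every positive integer $d$, \[ g\Big(1+\frac{d}{t},t\Big)\le \frac{(2d+1)t+d^2}{(t+d)(2d+1)} = 1-\frac{d^2+d}{(t+d)(2d+1)}. \]
   Context: Let $\mathbb{F}$ be a finite field and $x_1,\dots,x_p$ a basis of $\mathbb{F}^p$. A $[t\times m,p]$ array code is a $t\times m$ array whose entries (cells) are linear combinations of $x_1,\dots,x_p$; its columns are called servers. It has the $k$-PIR property (is a $[t\times m,p]$ $k$-PIR array code) if for every $i\in\{1,\dots,p\}$ there exist $k$ pairwise disjoint sets $S_1,\dots,S_k$ of columns such that for every $j$ the vector $x_i$ lies in the linear span of all entries of the columns in $S_j$. Its PIR rate is $k/m$. For a rational $s>1$ and a positive integer $t$ with $st$ an integer, $g(s,t)$ is the largest PIR rate $k/m$ of a $[t\times m,st]$ $k$-PIR array code (over all finite fields, all $m$ and all $k$). *)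

(* Defs.v *)
From HB Require Import structures.
From mathcomp Require Import all_boot all_order all_algebra.
Set Implicit Arguments. Unset Strict Implicit. Unset Printing Implicit Defensive.
Import Order.TTheory GRing.Theory Num.Theory.
Local Open Scope ring_scope.

(* A [t x m, p] array code over F: cell (a, j) (row a, column/server j) is a
   vector of F^p, i.e. its coordinates w.r.t. the basis x_1..x_p of F^p. *)
Definition array_code (F : fieldType) (t m p : nat) := 'I_t -> 'I_m -> 'rV[F]_p.

Definition in_span_cols (F : fieldType) (t m p : nat) (C : array_code F t m p)
    (S : {set 'I_m}) (v : 'rV[F]_p) : Prop :=
  exists c : 'I_t -> 'I_m -> F, v = \sum_(a < t) \sum_(j in S) c a j *: C a j.

Definition basis_vec (F : fieldType) (p : nat) (i : 'I_p) : 'rV[F]_p :=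
  delta_mx 0 i.

Definition is_kPIR (F : fieldType) (t m p k : nat) (C : array_code F t m p) : Prop :=
  forall i : 'I_p, exists S : 'I_k -> {set 'I_m},
    (forall j1 j2 : 'I_k, j1 != j2 -> [disjoint S j1 & S j2]) /\
    (forall j : 'I_k, in_span_cols C (S j) (basis_vec F i)).

(* r is the PIR rate k/m of some [t x m, s t] k-PIR array code over some
   finite field. g(s,t) is the largest such r. *)
Definition pir_rate_achievable (s : rat) (t : nat) (r : rat) : Prop :=
  exists (F : finFieldType) (m k p : nat) (C : array_code F t m p),
    p%:Q = s * t%:Q /\ @is_kPIR F t m p k C /\ r = k%:Q / m%:Q.

(* Main.v *)
Require Import Defs.
From mathcomp Require Import all_boot all_order all_algebra.
From mathcomp Require Import zify ring.
Import Order.TTheory GRing.Theory Num.Theory.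
Local Open Scope ring_scope.


Lemma span_sub (F : fieldType) t m p (C : array_code F t m p) S v n (V : 'M[F]_(n,p)) :
  in_span_cols C S v -> (forall a j, j \in S -> (C a j <= V)%MS) -> (v <= V)%MS.
Proof.
move=> [c ->] H; apply: summx_sub => a _; apply: summx_sub => j hj.
by apply: scalemx_sub; apply: H.
Qed.

Definition selmx (F : fieldType) p (B : {set 'I_p}) : 'M[F]_(#|B|, p) :=
  \matrix_(l < #|B|) delta_mx 0 (enum_val l).
Arguments selmx F {p} B.

Lemma selmx_free (F : fieldType) p (B : {set 'I_p}) : row_free (selmx F B).
Proof.
apply/row_freeP; exists ((\matrix_(c, l) (c == enum_val l)%:R) : 'M[F]_(p, #|B|)).
apply/matrixP => l l'; rewrite !mxE (bigD1 (enum_val l)) //= big1 ?addr0.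
  by rewrite !mxE !eqxx mul1r (inj_eq enum_val_inj) eq_sym.
by move=> c hc; rewrite !mxE eqxx /= (negbTE hc) mul0r.
Qed.

Lemma rank_bound (F : fieldType) t p (W : 'M[F]_(t, p)) (B : {set 'I_p}) :
  (forall i, i \in B -> (delta_mx (@ord0 0) i <= W)%MS) ->
  (#|B| <= t)%N /\ (#|B| = t -> forall i, i \notin B -> (W <= kermx (delta_mx i (@ord0 0)))%MS).
Proof.
move=> HB.
have sMW : (selmx F B <= W)%MS.
  by apply/row_subP => l; rewrite rowK; apply: HB; apply: enum_valP.
have rM : \rank (selmx F B) = #|B| by apply/eqP; apply: selmx_free.
have le1 := mxrankS sMW.
split; first by rewrite -rM (leq_trans le1) // rank_leq_row.
move=> hBt i hi.
have sWM : (W <= selmx F B)%MS.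
  have := mxrank_leqif_sup sMW; case=> _ <-.
  by rewrite eqn_leq le1 rM hBt rank_leq_row.
apply: submx_trans sWM _; apply/row_subP => l; rewrite rowK sub_kermx.
rewrite mul_delta_mx_cond; have -> : (enum_val l == i) = false.
  by apply/negbTE; apply: contra hi => /eqP <-; exact: enum_valP.
by rewrite mulr0n eqxx. Qed.

Open Scope nat_scope.
Lemma cardI_sum m (A X : {set 'I_m}) : #|A :&: X| = \sum_(j in X) (j \in A).
Proof.
rewrite -sum1_card (eq_bigl (fun j => (j \in X) && (j \in A))); last first.
  by move=> j; rewrite inE andbC.
by rewrite big_mkcondr /=; apply: eq_bigr => j _; case: (j \in A).
Qed.

Lemma disj_sum m k (S : 'I_k -> {set 'I_m}) (X : {set 'I_m}) :
  (forall j1 j2, j1 != j2 -> [disjoint S j1 & S j2]) ->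
  (\sum_(l < k) #|S l :&: X| <= #|X|)%N.
Proof.
move=> hd.
rewrite (eq_bigr _ (fun l _ => cardI_sum _ (S l) X)) exchange_big /= -sum1_card.
apply: leq_sum => j _.
case: (pickP (fun l => j \in S l)) => [l0 h0|none]; last first.
  by rewrite big1 // => l _; rewrite none.
rewrite (bigD1 l0) //= h0 big1 // => l hl.
by have := hd _ _ hl => /disjointFl/(_ h0) ->.
Qed.

Lemma card_sum (T : finType) (P : pred T) : #|[set j | P j]| = \sum_j P j.
Proof.
rewrite -sum1_card big_mkcond; apply: eq_bigr => j _; rewrite inE; by case: (P j).
Qed.

Lemma fin t d m k mF mN SB SF:
  1 < t ->
  (t+d) * k + ((t+d) * k + (t+d) * 0) <= (t+d) * m + SB ->
  SB <= mF * t + mN * (t - 1) ->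
  (t+d) * k <= (t+d) * mN + SF -> SF = mF * t -> mF + mN = m ->
  k * ((t+d) * (2 * d + 1)) <= ((2 * d + 1) * t + d ^ 2) * m.
Proof.
move=> ht H1 sB H2 sF hc.
rewrite sF in H2.
set p := t + d in H1 H2 *.
have E1 : 2 * (p * k) <= p * m + mF * t + mN * (t - 1) by lia.
have E2 := leq_add (leq_mul (leqnn d) E1) H2.
apply: leq_trans (leq_trans E2 _).
  by apply/eq_leq; rewrite /p; ring.
rewrite -hc /p; move: (t - 1) (subnK (ltnW ht)) => s <-.
apply/eq_leq; rewrite addn1; ring.
Qed.

Lemma main_nat (F : finFieldType) t d m k (C : array_code F t m (t + d)) :
  (2 <= t)%N -> @is_kPIR F t m (t + d) k C ->
  k * ((t + d) * (2 * d + 1)) <= ((2 * d + 1) * t + d ^ 2) * m.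
Proof.
set p := (t + d).
move=> ht hk.
pose W j := (\matrix_(a < t) C a j) : 'M[F]_(t,p).
pose x (i : 'I_p) : 'rV[F]_p := basis_vec F i.
pose B (j : 'I_m) : {set 'I_p} := [set i | (x i <= W j)%MS].
pose A (i : 'I_p) : {set 'I_m} := [set j | (x i <= W j)%MS].
pose Full : {set 'I_m} := [set j | #|B j| == t].
have hW : forall a j, (C a j <= W j)%MS.
  by move=> a j; rewrite -(rowK (fun a => C a j) a); exact: row_sub.
have hR : forall j, (#|B j| <= t) /\ (#|B j| = t -> forall i, i \notin B j ->
    (W j <= kermx (delta_mx i (@ord0 0)))%MS).
  by move=> j; apply: rank_bound => i; rewrite inE.
have hZ : forall i, ~ (x i <= kermx (delta_mx i (@ord0 0)))%MS.
  move=> i; rewrite sub_kermx /x /basis_vec mul_delta_mx.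
  by move/eqP/matrixP/(_ ord0 ord0); rewrite !mxE !eqxx => /eqP; rewrite oner_eq0.
have hx0 : forall i, x i != 0%R.
  move=> i; apply/eqP; move/matrixP/(_ ord0 i); rewrite /x /basis_vec !mxE !eqxx.
  by move/eqP; rewrite oner_eq0.
have per_i : forall i, (2 * k <= m + #|A i|) /\ (k <= #|~: Full| + #|Full :&: A i|).
  move=> i; have [S [hdisj hspan]] := hk i.
  have ha : forall l, 2 <= #|S l| + #|S l :&: A i|.
    move=> l; case: (boolP (0 < #|S l :&: A i|)) => h.
      have := subset_leq_card (subsetIl (S l) (A i)); lia.
    have h0 : #|S l :&: A i| = 0 by lia.
    rewrite h0 addn0; case: (leqP 2 #|S l|) => // h1.
    exfalso; move: h; rewrite h0 ltnn.
    case: (set_0Vmem (S l)) => [e | [j0 hj0]].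
      have : (x i <= (0%R : 'M[F]_p))%MS.
        by apply: span_sub (hspan l) _ => a j; rewrite e inE.
      by rewrite submx0 (negbTE (hx0 i)).
    have hj : forall j, j \in S l -> j = j0.
      have /card_le1_eqP h2 : #|S l| <= 1 by lia.
      by move=> j hjS; apply: h2.
    have hxi : (x i <= W j0)%MS.
      by apply: span_sub (hspan l) _ => a j /hj ->; apply: hW.
    have : j0 \in S l :&: A i by rewrite in_setI hj0 inE hxi.
    by move=> hin; move: h0; move/eqP; rewrite cards_eq0 => /eqP e; rewrite e inE in hin.
  have hb : forall l, 0 < #|S l :&: (~: Full :|: (Full :&: A i))|.
    move=> l; rewrite card_gt0; apply/negP => /eqP h0.
    have hj : forall j, j \in S l -> (j \in Full) && (j \notin A i).
      move=> j hjS; apply/negPn/negP => hn.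
      have : j \in S l :&: (~: Full :|: (Full :&: A i)).
        rewrite in_setI hjS in_setU in_setC in_setI /=.
        by move: hn; case: (j \in Full); case: (j \in A i).
      by rewrite h0 inE.
    apply: (hZ i); apply: span_sub (hspan l) _ => a j hjS.
    have /andP [hF hA] := hj j hjS.
    apply: submx_trans (hW a j) _; apply: (hR j).2.
      by move: hF; rewrite inE => /eqP.
    by move: hA; rewrite !inE.
  split.
    have e1 := disj_sum _ _ S [set: 'I_m] hdisj.
    have e2 := disj_sum _ _ S (A i) hdisj.
    rewrite cardsT card_ord in e1.
    have e3 : \sum_(l < k) 2 <= \sum_(l < k) (#|S l :&: [set: 'I_m]| + #|S l :&: A i|).
      by apply: leq_sum => l _; rewrite setIT; apply: ha.
    rewrite big_split /= sum_nat_const card_ord in e3.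
    by rewrite mulnC; apply: leq_trans e3 _; apply: leq_add.
  have e2 := disj_sum _ _ S (~: Full :|: (Full :&: A i)) hdisj.
  have e3 : \sum_(l < k) 1 <= \sum_(l < k) #|S l :&: (~: Full :|: (Full :&: A i))|.
    by apply: leq_sum => l _; apply: hb.
  rewrite sum_nat_const card_ord in e3.
  have := leq_card_setU (~: Full) (Full :&: A i); case=> e4 _; lia.
have H1 : \sum_(i < p) (2 * k) <= \sum_(i < p) (m + #|A i|).
  by apply: leq_sum => i _; case: (per_i i).
have H2 : \sum_(i < p) k <= \sum_(i < p) (#|~: Full| + #|Full :&: A i|).
  by apply: leq_sum => i _; case: (per_i i).
rewrite !big_split /= !sum_nat_const !card_ord in H1 H2.
have sA : \sum_(i < p) #|A i| = \sum_(j < m) #|B j|.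
  rewrite (eq_bigr _ (fun i _ => card_sum _ (fun j => (x i <= W j)%MS))).
  rewrite exchange_big /=; apply: eq_bigr => j _.
  by rewrite (card_sum _ (fun i => (x i <= W j)%MS)).
have sF : \sum_(i < p) #|Full :&: A i| = #|Full| * t.
  have eqI : forall i, #|Full :&: A i| = \sum_(j in Full) (j \in A i).
    by move=> i; rewrite setIC cardI_sum.
  rewrite (eq_bigr _ (fun i _ => eqI i)).
  rewrite exchange_big /= -sum_nat_const; apply: eq_bigr => j hj.
  have := (card_sum _ (fun i => (x i <= W j)%MS)); rewrite -/(B j)  => hBj.
  rewrite (eq_bigr (fun i => nat_of_bool (x i <= W j)%MS)); last by move=> i _; rewrite inE.
  rewrite -hBj.
  by apply/eqP; move: hj; rewrite inE.
have sB : \sum_(j < m) #|B j| <= #|Full| * t + #|~: Full| * (t - 1).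
  rewrite (bigID (fun j => j \in Full)) /=; apply: leq_add.
    rewrite -sum_nat_const; apply: leq_sum => j _; exact: (hR j).1.
  rewrite (eq_bigl (fun j => j \in ~: Full)); last by move=> j; rewrite in_setC.
  rewrite -sum_nat_const; apply: leq_sum => j hj.
  have h1 := (hR j).1; rewrite !inE in hj; move: hj h1; set q := #|B j|; move=> hj h1.
  have : q < t by rewrite ltn_neqAle hj h1.
  lia.
have hc := cardsC Full; rewrite card_ord in hc.
rewrite sA in H1.
exact: (fin _ _ _ _ _ _ _ _ ht H1 sB H2 sF hc).
Qed.

Close Scope nat_scope.
Local Open Scope ring_scope.

Theorem theorem4 (t d : nat) (ht : (2 <= t)%N) (hd : (0 < d)%N) (r : rat) :
  pir_rate_achievable (1 + d%:Q / t%:Q) t r ->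
  r <= (((2 * d + 1) * t + d ^ 2)%N)%:Q / (((t + d) * (2 * d + 1))%N)%:Q.
Proof.
move=> [F [m [k [p [C [hp [hk ->]]]]]]].
have tQ : t%:Q != 0 by rewrite -pmulrn pnatr_eq0 -lt0n (ltnW ht).
rewrite mulrDl mul1r divfK // -!pmulrn in hp.
move/eqP: hp; rewrite -natrD eqr_nat => /eqP ep; subst p.
have Hn := main_nat F t d m k C ht hk.
rewrite -!pmulrn.
case: (posnP m) => [-> | hm].
  by rewrite invr0 mulr0 divr_ge0 // ler0n.
have hD : (0 : rat) < ((t + d) * (2 * d + 1))%N%:R.
  rewrite ltr0n; lia.

rewrite ler_pdivrMr ?ltr0n // mulrAC ler_pdivlMr // -!natrM ler_nat.
exact: Hn.
Qed.
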